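(* Consider the random intersection graph $G(n,m,F)$ defined in the context, with $m=\lfloor\beta n^\alpha\rfloor$ and $p_i=\gamma W_i n^{-(1+\alpha)/2}\wedge 1$, and assume $F$ has finite mean (normalized to $1$). Let $D_i$ be the degree of vertex $i$. Then for every $\alpha>0$, $\mathbf{E}[D_i\mid W_i]\to\beta\gamma^2W_i$ as $n\to\infty$ (i.e. for every fixed value $w>0$ of $W_i$, with the other weights i.i.d. with distribution $F$, the expected degree of $i$ converges to $\beta\gamma^2 w$).
   Context: Model $G(n,m,F)$: fix constants $\alpha,\beta,\gamma>0$ and a probability distribution $F$ on $(0,\infty)$; if $F$ has finite mean it is assumed to have mean $1$. For a positive integer $n$ let $m=\lfloor\beta n^\alpha\rfloor$, let $\mathcal V=\{1,\dots,n\}$ (vertices, ''individuals'') and $\mathcal A$ a set of $m$ elements (''groups''). Let $W_1,\dots,W_n$ be i.i.d. with distribution $F$ and set $p_i=\gamma W_i n^{-(1+\alpha)/2}\wedge 1$. Conditionally on the weights, form a bipartite graph $B(n,m,F)$ on $\mathcal V\cup\mathcal A$ by including each edge between $i\in\mathcal V$ and $a\in\mathcal A$ independently with probability $p_i$. The graph $G(n,m,F)$ on $\mathcal V$ has an edge between distinct $i,j$ iff some $a\in\mathcal A$ is adjacent to both $i$ and $j$ in $B(n,m,F)$. The parameters $\alpha,\beta,\gamma,F$ do not depend on $n$. *)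

(* Defs.v *)
From HB Require Import structures.
From mathcomp Require Import all_boot all_order all_algebra.
From mathcomp Require Import all_classical all_reals all_analysis.
Set Implicit Arguments. Unset Strict Implicit. Unset Printing Implicit Defensive.
Import Order.TTheory GRing.Theory Num.Theory.
Local Open Scope classical_set_scope.
Local Open Scope ring_scope.

Section RIG.
Variable R : realType.

Definition ngroups (alpha beta : R) (n : nat) : nat :=
  Num.truncn (beta * (n%:R `^ alpha)).

Definition edgeprob (alpha gamma : R) (n : nat) (w : R) : R :=
  Order.min (gamma * w * (n%:R `^ (- ((1 + alpha) / 2)))) 1.

(* degree of vertex i (given as a nat) in the intersection graph G induced by
   the bipartite graph B on 'I_n x 'I_m *)
Definition igdegree (n m : nat) (B : {ffun 'I_n * 'I_m -> bool}) (i : nat) : nat :=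
  #|[set j : 'I_n | (val j != i) &&
      [exists a : 'I_m, B (j, a) && [exists k : 'I_n, (val k == i) && B (k, a)]]]|.

Definition bipprob (alpha gamma : R) (n m : nat) (wt : nat -> R)
    (B : {ffun 'I_n * 'I_m -> bool}) : R :=
  \prod_(k : 'I_n * 'I_m)
     (if B k then edgeprob alpha gamma n (wt (val k.1))
      else 1 - edgeprob alpha gamma n (wt (val k.1))).

(* E[D_i | W_1..W_n = wt] in G(n,m,F) with m = floor(beta n^alpha) *)
Definition cond_degree (alpha beta gamma : R) (n : nat) (wt : nat -> R) (i : nat) : R :=
  let m := ngroups alpha beta n in
  \sum_(B : {ffun 'I_n * 'I_m -> bool})
     bipprob alpha gamma wt B * (igdegree B i)%:R.

(* W is a sequence of i.i.d. random variables with distribution F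
   (mutual independence: product rule over every finite subfamily) *)
Definition iid_law d (T : measurableType d) (P : probability T R)
    (F : probability R R) (W : nat -> T -> R) : Prop :=
  [/\ (forall j, measurable_fun setT (W j)),
      (forall j (A : set R), measurable A -> P (W j @^-1` A) = F A) &
      (forall (J : seq nat) (A : nat -> set R), uniq J ->
          (forall j, measurable (A j)) ->
          P (\bigcap_(j in [set j | j \in J]) (W j @^-1` A j)) =
          (\prod_(j <- J) fine (P (W j @^-1` A j)))%:E)].

End RIG.

(* Main.v *)
Require Import Defs.
From HB Require Import structures.
From mathcomp Require Import all_boot all_order all_algebra.
From mathcomp Require Import all_classical all_reals all_analysis.
From mathcomp Require Import ring lra.
Import Order.TTheory GRing.Theory Num.Theory.
Import numFieldNormedType.Exports.
Local Open Scope classical_set_scope.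
Local Open Scope ring_scope.
Set Implicit Arguments. Unset Strict Implicit.


Section Comb.
Variable R : comRingType.

Lemma sum_ffun_bool (I : finType) (G : I -> bool -> R) :
  \sum_(f : {ffun I -> bool}) \prod_x G x (f x) = \prod_x (G x true + G x false).
Proof.
rewrite -(@bigA_distr_bigA R 0 1 *%R +%R I bool G).
have E : forall x, \sum_(b : bool) G x b = G x true + G x false.
  by move=> x; rewrite big_bool.
under [RHS]eq_bigr do rewrite -E.
by [].
Qed.

Lemma prod_one_minus (J : finType) (y : J -> R) :
  \prod_a (1 - y a) = \sum_(g : {ffun J -> bool}) \prod_a (if g a then - y a else 1).
Proof.
rewrite (sum_ffun_bool (fun a b => if b then - y a else 1)).
by apply: eq_bigr => a _; rewrite addrC.
Qed.

Variables (n m : nat) (p : 'I_n -> R).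

Definition qq (k : 'I_n * 'I_m) (b : bool) : R := if b then p k.1 else 1 - p k.1.

Lemma sum_bip1 : \sum_(B : {ffun 'I_n * 'I_m -> bool}) \prod_k qq k (B k) = 1.
Proof.
rewrite sum_ffun_bool; apply: big1 => k _; rewrite /qq.
by rewrite addrC subrK.
Qed.

Lemma sum_bip_edge (j io : 'I_n) (hne : j != io) :
  \sum_(B : {ffun 'I_n * 'I_m -> bool}) (\prod_k qq k (B k)) *
     (1 - \prod_(a : 'I_m) (1 - ((B (j, a) && B (io, a)) : nat)%:R))
  = 1 - (1 - p j * p io) ^+ m.
Proof.
pose h (g : {ffun 'I_m -> bool}) (k : 'I_n * 'I_m) (b : bool) : R :=
  if g k.2 && ((k.1 == j) || (k.1 == io)) then (b : nat)%:R else 1.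
have Hy : forall (B : {ffun 'I_n * 'I_m -> bool}) (g : {ffun 'I_m -> bool}),
    \prod_a (if g a then - ((B (j, a) && B (io, a)) : nat)%:R else 1) =
    (\prod_(a : 'I_m) (if g a then -1 else 1)) * \prod_k h g k (B k).
  move=> B g.
  have -> : \prod_k h g k (B k) = \prod_(a : 'I_m) \prod_(x : 'I_n) h g (x, a) (B (x, a)).
    rewrite exchange_big pair_big /=; apply: eq_bigr => -[x a] _ //.
  rewrite -big_split /=; apply: eq_bigr => a _.
  rewrite /h /=; case: (g a) => /=; last by rewrite mul1r big1.
  rewrite (bigD1 j) //= (bigD1 io) /=; last by rewrite eq_sym.
  rewrite !eqxx orbT big1 ?mulr1; last first.
    by move=> x /andP [hx1 hx2]; rewrite (negbTE hx1) (negbTE hx2).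
  by rewrite /= -natrM mulnb mulN1r.
have Hq : forall g : {ffun 'I_m -> bool}, \sum_(B : {ffun 'I_n * 'I_m -> bool})
    (\prod_k qq k (B k)) * \prod_k h g k (B k) =
    \prod_(a : 'I_m) (if g a then p j * p io else 1).
  move=> g.
  under eq_bigr do rewrite -big_split /=.
  rewrite (sum_ffun_bool (fun k b => qq k b * h g k b)).
  rewrite -(pair_big xpredT xpredT (fun x a => qq (x, a) true * h g (x, a) true +
                                          qq (x, a) false * h g (x, a) false)) /=.
  rewrite exchange_big /=; apply: eq_bigr => a _.
  rewrite /qq /h /=; case: (g a) => /=; last first.
    by apply: big1 => x _; rewrite !mulr1 addrC subrK.
  rewrite (bigD1 j) //= (bigD1 io) /=; last by rewrite eq_sym.
  rewrite !eqxx orbT big1 ?mulr1; last first.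
    move=> x /andP [hx1 hx2]; rewrite (negbTE hx1) (negbTE hx2) /=.
    by rewrite !mulr1 addrC subrK.
  by rewrite /= !mulr0 !addr0.
under eq_bigr do rewrite prod_one_minus mulrBr mulr1 big_distrr /=.
rewrite sumrB sum_bip1 exchange_big /=; congr (_ - _).
transitivity (\sum_(g : {ffun 'I_m -> bool}) \prod_a (if g a then - (p j * p io) else 1)).
  apply: eq_bigr => g _.
  under eq_bigr do rewrite Hy mulrCA.
  rewrite -big_distrr /= Hq -big_split /=; apply: eq_bigr => a _.
  by case: (g a); rewrite ?mulN1r ?mulr1.
rewrite -prod_one_minus prodr_const card_ord //.
Qed.

End Comb.

Lemma in_cset (T : Type) (b : T -> bool) x : (x \in [set y | b y]%classic) = b x.
Proof. by apply/idP/idP => [/set_mem | h] //; apply/mem_set. Qed.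



Lemma cond_degree_eq (R : realType) alpha beta gamma n (wt : nat -> R) i
  (hi : (i < n)%N) :
  cond_degree alpha beta gamma n wt i =
  \sum_(j < n | val j != i) (1 - (1 - edgeprob alpha gamma n (wt j) *
                             edgeprob alpha gamma n (wt i)) ^+ ngroups alpha beta n).
Proof.
rewrite /cond_degree /=.
set m := ngroups alpha beta n.
pose p (x : 'I_n) := edgeprob alpha gamma n (wt (val x)).
pose io := Ordinal hi.
have Hb : forall B : {ffun 'I_n * 'I_m -> bool},
   bipprob alpha gamma wt B = \prod_k qq p k (B k).
  by move=> B; rewrite /bipprob; apply: eq_bigr => k _.
have Hd : forall B : {ffun 'I_n * 'I_m -> bool}, (igdegree B i)%:R =
   \sum_(j : 'I_n) (if val j != i then
      (1 - \prod_(a : 'I_m) (1 - ((B (j, a) && B (io, a)) : nat)%:R)) else 0) :> R.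
  move=> B; rewrite /igdegree -sum1_card natr_sum big_mkcond /=; apply: eq_bigr => j _; rewrite in_cset.
  case: (val j != i) => //=.
  have -> : [exists a, B (j, a) && [exists k, (val k == i) && B (k, a)]] =
            [exists a, B (j, a) && B (io, a)].
    apply: eq_existsb => a; congr (_ && _); apply/existsP/idP.
      by move=> [k /andP [/eqP hk hB]]; have <- : k = io by apply: val_inj.
    by move=> hB; exists io; rewrite eqxx.
  case: existsP => [[a0 ha0]|hn].
    by rewrite (bigD1 a0) //= ha0 subrr mul0r subr0.
  rewrite big1 ?subrr // => a _; case E: (B (j, a) && B (io, a)); last by rewrite subr0.
  by exfalso; apply: hn; exists a.
under eq_bigr do rewrite Hb Hd big_distrr /=.
rewrite exchange_big /= [RHS]big_mkcond /=; apply: eq_bigr => j _.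
case: ifP => hj; last by apply: big1 => B _; rewrite mulr0.
have hne : j != io by apply/eqP => hji; move: hj; rewrite hji /= eqxx.
by rewrite -(@sum_bip_edge R n m p j io hne).
Qed.


Section Ana.
Variable R : realType.

Lemma powRV (x a : R) : 0 < x -> (x^-1) `^ a = (x `^ a)^-1.
Proof.
move=> x0.
have h : (x^-1 * x) `^ a = (x^-1) `^ a * x `^ a.
  by rewrite powRM // ?invr_ge0 ltW.
rewrite mulVf ?gt_eqF // powR1 in h.
have xa : x `^ a != 0 by rewrite gt_eqF // powR_gt0.
by apply: (mulIf xa); rewrite -h mulVf.
Qed.

Lemma powRn_cvg0 (a : R) : 0 < a -> (fun n : nat => n%:R `^ (- a)) @ \oo --> 0.
Proof.
move=> ha.
have h := (cvg_at_rightP (fun x : R => x `^ a) 0 0).1 (powR_cvg0 ha) harmonic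
   (conj (@harmonic_gt0 R) cvg_harmonic).
rewrite -cvg_shiftS; apply: cvg_trans h; apply: near_eq_cvg; near=> n.
by rewrite /= powRV // powRN.
Unshelve. all: by end_near. Qed.


Lemma bern_lo (y : R) m : 0 <= y <= 1 -> 1 - m%:R * y <= (1 - y) ^+ m.
Proof.
move=> /andP [y0 y1]; elim: m => [|m IH]; first by rewrite mul0r subr0 expr0.
rewrite exprS; have h1 : 0 <= 1 - y by rewrite subr_ge0.
apply: le_trans (ler_wpM2l h1 IH); have -> : m.+1%:R = m%:R + 1 :> R by rewrite -addn1 natrD.
have m0 : 0 <= m%:R :> R by [].
nra.
Qed.

Lemma bern_hi (y : R) m : 0 <= y <= 1 ->
  (1 - y) ^+ m <= 1 - m%:R * y + (m%:R * y) ^+ 2.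
Proof.
move=> /andP [y0 y1]; elim: m => [|m IH]; first by rewrite mul0r subr0 expr0n addr0.
rewrite exprS; have h1 : 0 <= 1 - y by rewrite subr_ge0.
apply: le_trans (ler_wpM2l h1 IH) _; have -> : m.+1%:R = m%:R + 1 :> R by rewrite -addn1 natrD.
have m0 : 0 <= m%:R :> R by [].
have y2 : 0 <= y * y by nra.
have y3 : 0 <= m%:R * m%:R * y * y * y by rewrite !mulr_ge0.
rewrite !expr2; nra.
Qed.

Lemma g_bounds (y : R) m : 0 <= y <= 1 ->
  [/\ 0 <= 1 - (1 - y) ^+ m, 1 - (1 - y) ^+ m <= m%:R * y &
      m%:R * y - (m%:R * y) ^+ 2 <= 1 - (1 - y) ^+ m].
Proof.
move=> hy; have /andP [y0 y1] := hy; split.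
- rewrite subr_ge0 exprn_ile1 // ?subr_ge0 //; by rewrite lerBlDr lerDl.
- by have := bern_lo m hy; lra.
- by have := bern_hi m hy; lra.
Qed.

End Ana.

Section Key.
Variable R : realType.
Variables alpha beta gamma w : R.
Hypotheses (ha : 0 < alpha) (hb : 0 < beta) (hg : 0 < gamma) (hw : 0 < w).

Definition cc (n : nat) : R := n%:R `^ (- ((1 + alpha) / 2)).
Definition dd (n : nat) : R := n%:R `^ (- alpha).
Definition mm (n : nat) : nat := ngroups alpha beta n.
Definition pw (n : nat) : R := edgeprob alpha gamma n w.
Definition gg (n : nat) (x : R) : R := 1 - (1 - edgeprob alpha gamma n x * pw n) ^+ mm n.

Lemma cc_sq n : (0 < n)%N -> cc n * cc n = n%:R^-1 * dd n.
Proof.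
move=> n0; have hn : n%:R != 0 :> R by rewrite pnatr_eq0 -lt0n.
rewrite /cc /dd -powRD; last by rewrite hn implybT.
rewrite -(powR_inv1 (ler0n _ n)) -powRD; last by rewrite hn implybT.
by congr (_ `^ _); field.
Qed.

Lemma dd_inv n : (0 < n)%N -> n%:R `^ alpha * dd n = 1.
Proof.
by move=> n0; rewrite /dd powRN mulfV // gt_eqF // powR_gt0 // ltr0n.
Qed.

Lemma mm_le n : (mm n)%:R <= beta * n%:R `^ alpha.
Proof. by rewrite /mm /ngroups truncn_le mulr_ge0 ?powR_ge0 // ltW. Qed.

Lemma mm_gt n : beta * n%:R `^ alpha < (mm n)%:R + 1.
Proof.
have /andP [_ h] := truncn_itv (mulr_ge0 (ltW hb) (powR_ge0 n%:R alpha)).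
by move: h; rewrite /mm /ngroups -natr1.
Qed.

Lemma ep_range n x : 0 <= x -> 0 <= edgeprob alpha gamma n x <= 1.
Proof.
move=> x0; rewrite /edgeprob le_min ge_min lexx orbT andbT /=.
by rewrite !mulr_ge0 ?powR_ge0 // ltW.
Qed.

Lemma ep_le n x : edgeprob alpha gamma n x <= gamma * x * cc n.
Proof. by rewrite /edgeprob ge_min lexx. Qed.

Lemma ep_eq n x : gamma * x * cc n <= 1 -> edgeprob alpha gamma n x = gamma * x * cc n.
Proof. by move=> h; rewrite /edgeprob; apply/min_idPl. Qed.

Lemma y_range n x : 0 <= x -> 0 <= edgeprob alpha gamma n x * pw n <= 1.
Proof.
move=> x0; have /andP [a0 a1] := ep_range n x0.
have /andP [b0 b1] := ep_range n (ltW hw).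
by rewrite mulr_ge0 //= mulr_ile1.
Qed.

Lemma gg_ge0 n x : 0 <= x -> 0 <= gg n x.
Proof. by move=> x0; have [] := g_bounds (mm n) (y_range n x0). Qed.

Definition KK : R := beta * gamma ^+ 2 * w.

Lemma dom_bound n x : 0 <= x -> 0 <= (n.-1)%:R * gg n x <= KK * x.
Proof.
move=> x0; have [g0 gup _] := g_bounds (mm n) (y_range n x0).
rewrite mulr_ge0 //=.
case: n g0 gup => [|n] g0 gup; first by rewrite mul0r mulr_ge0 // /KK mulr_ge0 // ?exprn_ge0 ?mulr_ge0 // ltW.
set y := edgeprob alpha gamma n.+1 x * pw n.+1.
have hy : y <= gamma ^+ 2 * w * x * (n.+1%:R^-1 * dd n.+1).
  rewrite -cc_sq //.
  have := ep_le n.+1 x; have := ep_le n.+1 w.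
  have /andP [a0 _] := ep_range n.+1 x0; have /andP [b0 _] := ep_range n.+1 (ltW hw).
  move=> h1 h2; rewrite /y /pw.
  apply: le_trans (ler_pM a0 b0 h2 h1) _.
  by rewrite expr2 le_eqVlt; apply/orP; left; apply/eqP; ring.
have hm := mm_le n.+1; have hd := dd_inv (ltn0Sn n).
have d0 : 0 <= dd n.+1 by apply: powR_ge0.
have hn : n.+1%:R * n.+1%:R^-1 = 1 :> R by rewrite mulfV.
have hn1 : n.+1.-1%:R <= n.+1%:R :> R by rewrite ler_nat leq_pred.
have m0 : 0 <= (mm n.+1)%:R :> R by [].
have c0 : 0 <= gamma ^+ 2 * w * x by rewrite !mulr_ge0 ?exprn_ge0 // ltW.
have i0 : 0 <= n.+1%:R^-1 :> R by rewrite invr_ge0.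
apply: (le_trans (ler_wpM2l (ler0n _ _) gup)).
apply: (le_trans (ler_wpM2l (ler0n _ _) (ler_wpM2l m0 hy))).
apply: le_trans (ler_wpM2r _ hn1) _.
  by do 3 apply: mulr_ge0 => //.
have e : n.+1%:R * ((mm n.+1)%:R * (gamma ^+ 2 * w * x * (n.+1%:R^-1 * dd n.+1)))
   = gamma ^+ 2 * w * x * ((mm n.+1)%:R * dd n.+1).
  by field; rewrite addrC natr1 pnatr_eq0.
rewrite e (_ : KK * x = gamma ^+ 2 * w * x * beta); last by rewrite /KK; ring.
apply: (ler_wpM2l c0).
by apply: le_trans (ler_wpM2r d0 hm) _; rewrite -mulrA hd mulr1.
Qed.

Lemma inv_cvg0 : (fun n : nat => n%:R^-1 : R) @ \oo --> 0.
Proof.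
have := @powRn_cvg0 R 1 ltr01.
by under eq_fun do rewrite powR_inv1 //.
Qed.

Lemma cc_cvg0 : cc @ \oo --> 0.
Proof. by apply: powRn_cvg0; rewrite divr_gt0 // addr_gt0. Qed.

Lemma near_pos : \forall n \near \oo, (0 < n)%N.
Proof. exact: nbhs_infty_gt. Qed.

Lemma a_cvg : (fun n => (mm n)%:R * dd n) @ \oo --> beta.
Proof.
apply: (@squeeze_cvgr _ _ _ _ (fun n => beta - dd n) (fun=> beta)); last 2 first.
- by rewrite -[X in _ --> X]subr0; apply: cvgB; [exact: cvg_cst | exact: powRn_cvg0].
- exact: cvg_cst.
near=> n.
have n0 : (0 < n)%N by near: n; exact: near_pos.
have hd := dd_inv n0; have d0 : 0 <= dd n by apply: powR_ge0.
have h1 := ler_wpM2r d0 (mm_le n).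
have h2 := ler_wpM2r d0 (ltW (mm_gt n)).
rewrite -mulrA hd mulr1 in h1; rewrite -mulrA hd mulr1 in h2.
apply/andP; split; last exact: h1.
by move: h2; rewrite mulrDl mul1r; lra.
Unshelve. all: by end_near. Qed.

Lemma b_cvg : (fun n : nat => (n.-1)%:R * n%:R^-1 : R) @ \oo --> (1 : R).
Proof.
apply: (@cvg_trans _ ((fun n : nat => 1 - n%:R^-1 : R) @ \oo)).
  apply: near_eq_cvg; near=> n.
  have n0 : (0 < n)%N by near: n; exact: near_pos.
  by rewrite -(prednK n0) /= -natr1; field; rewrite natr1 pnatr_eq0.
by have h := cvgB (cvg_cst (1:R)) inv_cvg0; rewrite subr0 in h; exact: h.
Unshelve. all: by end_near. Qed.

Lemma near_clip x : 0 < x -> \forall n \near \oo, gamma * x * cc n <= 1.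
Proof.
move=> x0; have gx : 0 < gamma * x by rewrite mulr_gt0.
have gi : 0 < (gamma * x)^-1 by rewrite invr_gt0.
have h := @cvgr_lt R _ _ _ _ _ cc_cvg0 _ gi.
near=> n; have hn : cc n < (gamma * x)^-1 by near: n; exact: h.
have c0 : 0 <= cc n by apply: powR_ge0.
by rewrite -(ler_pM2l gi) mulr1 mulrA mulVf ?gt_eqF // mul1r ltW.
Unshelve. all: by end_near. Qed.

Lemma hh_cvg x : 0 < x -> (fun n => (n.-1)%:R * gg n x) @ \oo --> KK * x.
Proof.
move=> x0.
pose y n := edgeprob alpha gamma n x * pw n.
pose v n := (mm n)%:R * y n.
pose u n := (n.-1)%:R * v n.
pose C := gamma ^+ 2 * w * x.
have ey : \forall n \near \oo, y n = C * (n%:R^-1 * dd n).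
  near=> n.
  have n0 : (0 < n)%N by near: n; exact: near_pos.
  rewrite /y /pw (@ep_eq n x); last by near: n; exact: near_clip.
  rewrite (@ep_eq n w); last by near: n; exact: near_clip.
  rewrite -cc_sq // /C expr2; ring.
have vc : v @ \oo --> 0.
  apply: (@cvg_trans _ ((fun n => C * (((mm n)%:R * dd n) * n%:R^-1)) @ \oo)).
    apply: near_eq_cvg; near=> n; rewrite /v.
    have -> : y n = C * (n%:R^-1 * dd n) by near: n; exact: ey.
    ring.
  rewrite -(mulr0 C) -(mulr0 beta); apply: cvgM; first exact: cvg_cst.
  by apply: cvgM; [exact: a_cvg | exact: inv_cvg0].
have uc : u @ \oo --> KK * x.
  apply: (@cvg_trans _ ((fun n => C * (((n.-1)%:R * n%:R^-1) * ((mm n)%:R * dd n))) @ \oo)).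
    apply: near_eq_cvg; near=> n; rewrite /u /v.
    have -> : y n = C * (n%:R^-1 * dd n) by near: n; exact: ey.
    ring.
  have -> : KK * x = C * (1 * beta) by rewrite /KK /C; ring.
  apply: cvgM; first exact: cvg_cst.
  by apply: cvgM; [exact: b_cvg | exact: a_cvg].
apply: (@squeeze_cvgr _ _ _ _ (fun n => u n - u n * v n) u); last 2 first.
- have h := cvgB uc (cvgM uc vc); rewrite mulr0 subr0 in h; exact: h.
- exact: uc.
near=> n.
have [_ gup glo] := g_bounds (mm n) (y_range n (ltW x0)).
have p0 : 0 <= (n.-1)%:R :> R by [].
have h1 := ler_wpM2l p0 gup; have h2 := ler_wpM2l p0 glo.
apply/andP; split.
  by apply: le_trans h2; rewrite /u /v /y expr2; rewrite le_eqVlt; apply/orP; left; apply/eqP; ring.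
by apply: le_trans h1 _; rewrite /u /v /y.
Unshelve. all: by end_near. Qed.

End Key.


Section Meas.
Variable R : realType.
Variables alpha beta gamma w : R.

Lemma gg_meas n : measurable_fun setT (gg alpha beta gamma w n).
Proof.
rewrite /gg /edgeprob.
apply: measurable_realfun.measurable_funB; first exact: measurable_cst.
apply: measurable_realfun.measurable_funX.
apply: measurable_realfun.measurable_funB; first exact: measurable_cst.
apply: measurable_realfun.measurable_funM; last exact: measurable_cst.
apply: measurable_realfun.measurable_minr; last exact: measurable_cst.
apply: measurable_realfun.measurable_funM; last exact: measurable_cst.
by apply: measurable_realfun.measurable_funM; [exact: measurable_cst | exact: measurable_id].
Qed.

Definition gtt n (x : R) := gg alpha beta gamma w n (Num.max x 0).

Lemma gtt_meas n : measurable_fun setT (gtt n).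
Proof.
apply: measurableT_comp; first exact: gg_meas.
by apply: measurable_realfun.measurable_maxr; [exact: measurable_id | exact: measurable_cst].
Qed.

End Meas.

Lemma push_int (R : realType) d (T : measurableType d) (P : probability T R)
  (F : probability R R) (X : T -> R) (mX : measurable_fun setT X)
  (hl : forall A, measurable A -> P (X @^-1` A) = F A)
  (f : R -> R) (mf : measurable_fun setT f) (f0 : forall x, 0 <= f x) :
  (\int[P]_t (f (X t))%:E = \int[F]_x (f x)%:E)%E.
Proof.
have := @ge0_integral_pushforward _ _ T R R X mX P setT (fun x => (f x)%:E) measurableT.
rewrite preimage_setT => <- //.
- apply: eq_measure_integral => A mA _ /=; by rewrite /pushforward hl.
- exact/measurable_realfun.measurable_EFinP.
- by move=> y _; rewrite lee_fin.
Qed.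


Lemma sum_ne (R : realType) n i (hi : (i < n)%N) (c : R) :
  \sum_(j < n | val j != i) c = (n.-1)%:R * c.
Proof.
have h : \sum_(j < n) c = c + \sum_(j < n | val j != i) c.
  rewrite (bigD1 (Ordinal hi)) //=; congr (_ + _).
have : (0 < n)%N by apply: leq_ltn_trans hi.
move=> n0; rewrite sumr_const card_ord in h.
by apply: (addrI c); rewrite -h -{1}(prednK n0) mulrSr mulr_natl addrC.
Qed.

Lemma neg0_meas (R : realType) : measurable [set x : R | x <= 0].
Proof.
rewrite (_ : [set x : R | x <= 0] = `]-oo, 0]%classic); first exact: measurable_itv.
by apply/seteqP; split => x /=; rewrite in_itv.
Qed.

Unset Implicit Arguments.

Theorem proposition1p1 (R : realType) (alpha beta gamma : R)
  (halpha : 0 < alpha) (hbeta : 0 < beta) (hgamma : 0 < gamma)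
  (F : probability R R)
  (hFpos : F [set x : R | x <= 0] = 0%E)
  (hFint : F.-integrable setT (fun x : R => x%:E))
  (hFmean : (\int[F]_x x%:E = 1)%E)
  (d : measure_display) (T : measurableType d) (P : probability T R)
  (W : nat -> T -> R) (hW : iid_law P F W)
  (i : nat) (w : R) (hw : 0 < w) :
  (fun n : nat =>
     ('E_P[ fun t => cond_degree alpha beta gamma n
                      (fun j => if j == i then w else W j t) i ])%E)
    @ \oo --> (beta * gamma ^+ 2 * w)%:E.
Proof.
have [mW hlaw _] := hW.
pose hh n x := (n.-1)%:R * gtt alpha beta gamma w n x.
have hh_meas : forall n, measurable_fun setT (hh n).
  move=> n; apply: measurable_realfun.measurable_funM; first exact: measurable_cst.
  exact: gtt_meas.
have Fneg : F.-negligible [set x : R | x <= 0].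
  by exists [set x : R | x <= 0]; split => //; exact: neg0_meas.
have Ppos : \forall t \ae P, forall j, 0 < W j t.
  have : P.-negligible (\bigcup_j (W j @^-1` [set x : R | x <= 0])).
    apply: negligible_bigcup => j.
    exists (W j @^-1` [set x : R | x <= 0]); split => //.
    - by rewrite -[X in measurable X]setTI; apply: mW => //; exact: neg0_meas.
    - by rewrite -hFpos; apply: hlaw; exact: neg0_meas.
  apply: negligibleS => t /= hnt; apply: contrapT => hn; apply: hnt => j.
  rewrite ltNge; apply/negP => hj; apply: hn; by exists j.
have stepA : forall n, (i < n)%N ->
   ('E_P[ fun t => cond_degree alpha beta gamma n
                      (fun j => if j == i then w else W j t) i ])%E =
   (\int[F]_x (hh n x)%:E)%E.
  move=> n hi; rewrite unlock.
  transitivity (\int[P]_t (\sum_(j < n | val j != i) (gg alpha beta gamma w n (W j t))%:E))%E.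
    apply: eq_integral => t _; rewrite sumEFin; congr EFin.
    rewrite cond_degree_eq //; apply: eq_bigr => j hj.
    by rewrite /gg /pw /mm (negbTE hj) eqxx.
  transitivity (\int[P]_t (\sum_(j < n | val j != i) (gtt alpha beta gamma w n (W j t))%:E))%E.
    apply: ae_eq_integral => //.
    - under eq_fun do rewrite -big_filter.
      apply: emeasurable_sum => j; apply/measurable_realfun.measurable_EFinP.
      by apply: measurableT_comp; [exact: gg_meas | exact: mW].
    - under eq_fun do rewrite -big_filter.
      apply: emeasurable_sum => j; apply/measurable_realfun.measurable_EFinP.
      by apply: measurableT_comp; [exact: gtt_meas | exact: mW].
    apply: filterS Ppos => t ht _; apply: eq_bigr => j _.
    by rewrite /gtt max_l // ltW.
  under eq_integral do rewrite -big_filter.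
  rewrite ge0_integral_sum //; last 2 first.
  - move=> j; apply/measurable_realfun.measurable_EFinP.
    by apply: measurableT_comp; [exact: gtt_meas | exact: mW].
  - move=> j t _; rewrite lee_fin.
    by apply: gg_ge0 => //; rewrite le_max lexx orbT.
  have gtt0 : forall x, 0 <= gtt alpha beta gamma w n x.
    by move=> x; apply: gg_ge0 => //; rewrite le_max lexx orbT.
  transitivity (\sum_(j < n | val j != i) \int[F]_x (gtt alpha beta gamma w n x)%:E)%E.
    rewrite big_filter; apply: eq_bigr => j _.
    exact: (@push_int R d T P F (W j) (mW j) (hlaw j) _ (gtt_meas alpha beta gamma w n) gtt0).
  rewrite -big_filter -(@ge0_integral_sum _ _ R F setT measurableT _ (fun _ x => (gtt alpha beta gamma w n x)%:E)) //; last 2 first.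
  - by move=> _; apply/measurable_realfun.measurable_EFinP; exact: gtt_meas.
  - by move=> _ x _; rewrite lee_fin.
  by apply: eq_integral => x _; rewrite big_filter sumEFin sum_ne.
have KKe : beta * gamma ^+ 2 * w = KK beta gamma w by [].
have dc := @dominated_convergence _ R R F setT measurableT
  (fun n x => (hh n x)%:E) (fun x => (KK beta gamma w * x)%:E)
  (fun x => (KK beta gamma w * `|x|)%:E).
have [] := dc.
- by move=> n; apply/measurable_realfun.measurable_EFinP; exact: hh_meas.
- apply/measurable_realfun.measurable_EFinP.
  by apply: measurable_realfun.measurable_funM; [exact: measurable_cst | exact: measurable_id].
- apply: negligibleS Fneg => x /= hx; rewrite leNgt; apply/negP => x0; apply: hx => _.
  apply: cvg_EFin; first exact: nearW.
  have h := hh_cvg halpha hbeta hgamma hw x0.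
  apply: cvg_trans h; apply: near_eq_cvg; apply: nearW => n /=.
  by rewrite /hh /gtt max_l // ltW.
- have -> : (fun x => (KK beta gamma w * `|x|)%:E) =
            (fun x => (KK beta gamma w)%:E * (abse \o EFin) x)%E.
    by apply/funext => x /=; rewrite EFinM.
  by apply: integrableZl => //; exact: (integrable_abse hFint).
- apply: aeW => x n _.
  have hm : 0 <= Num.max x 0 by rewrite le_max lexx orbT.
  have /andP [h0 h1] := dom_bound alpha hbeta hgamma hw n hm.
  rewrite /= lee_fin ger0_norm // /hh /gtt; apply: le_trans h1 _.
  apply: ler_wpM2l; first by rewrite /KK !mulr_ge0 ?exprn_ge0 // ltW.
  by rewrite ge_max normr_ge0 ler_norm.
move=> _ _ hlim.
have hI : (\int[F]_x (KK beta gamma w * x)%:E = (KK beta gamma w)%:E)%E.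
  under eq_integral do rewrite EFinM.
  by rewrite integralZl // hFmean mule1.
rewrite hI in hlim; rewrite KKe.
apply: cvg_trans hlim; apply: near_eq_cvg; near=> n.
symmetry; apply: stepA; near: n; exact: nbhs_infty_gt.
Unshelve. all: by end_near. Qed.
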